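(* With the notation of the context, the functions $d$ and $g$ are $C^1$ on $(-1,1)$, and $d>0$, $g>0$. Moreover $$\lim_{\rho\to1^-}d(\rho)=\lambda e^{-rT}s_0e^{(\nu-\eta\frac{\mu-r}{\sigma}-\frac{\eta^2}{2})T},\qquad \lim_{\rho\to-1^+}d(\rho)=\lambda e^{-rT}s_0e^{(\nu+\eta\frac{\mu-r}{\sigma}-\frac{\eta^2}{2})T},$$ $$\lim_{\rho\to1^-}g(\rho)=\lambda e^{-rT}s_0e^{(\nu-\eta\frac{\mu-r}{\sigma})T},\qquad \lim_{\rho\to-1^+}g(\rho)=\lambda e^{-rT}s_0e^{(\nu+\eta\frac{\mu-r}{\sigma})T}.$$ For all $\rho\in(-1,1)$, $$\left(b(\rho)-\frac{\lambda e^{-rT}}{\theta(\rho)}\frac{w(\rho)^2}{2\eta^4T^2}e_2\right)_+\le a(\rho)\le b(\rho),$$ where $e_2=e^{2\eta^2T}-2(1+\eta^2T)e^{\frac{\eta^2T}{2}}+\eta^2T+1$. Moreover, $a$, $b$, $d$ and $g$ are bounded on $(-1,1)$.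
   Context: Fix $T>0$, $r,\nu,\mu\in\mathbb R$, $\eta>0$, $\sigma>0$, $s_0>0$, $\lambda>0$, $\gamma>0$; $N$ is a standard Gaussian random variable; $W$ is the Lambert function (inverse of $x\in(-1,\infty)\mapsto xe^x$). For $\rho\in(-1,1)$ define $\theta(\rho)=\lambda\gamma(1-\rho^2)$, $$w(\rho)=W\left(s_0\eta^2Te^{(\nu-\eta\rho\frac{\mu-r}{\sigma}-\frac{\eta^2}{2})T}\theta(\rho)\right),\qquad d(\rho)=\frac{\lambda e^{-rT}}{\theta(\rho)\eta^2T}\,w(\rho)\left(1+\frac{w(\rho)}{2}\right),$$ $$a(\rho)=-\frac{\lambda e^{-rT}}{\theta(\rho)}\ln\mathbb E\left(\exp\left(-\frac{w(\rho)}{\eta^2T}\left(e^{\eta\sqrt TN}-1-\eta\sqrt TN\right)\right)\right),\qquad b(\rho)=\frac{\lambda e^{-rT}}{\theta(\rho)}\frac{w(\rho)}{\eta^2T}\left(e^{\frac{\eta^2}{2}T}-1\right),$$ $$g(\rho)=d(\rho)+b(\rho)=\frac{\lambda e^{-rT}}{\theta(\rho)}\frac{w(\rho)}{\eta^2T}\left(e^{\frac{\eta^2}{2}T}+\frac{w(\rho)}{2}\right).$$ $x_+=\max(x,0)$. *)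

(* Defs.v *)
From Stdlib Require Import Reals ClassicalEpsilon.
From Coquelicot Require Import Coquelicot.
Open Scope R_scope.

(* Lambert W (principal branch): inverse of y in (-1,oo) |-> y e^y.
   For x in the range (-1/e, oo) it returns the unique y > -1 with y e^y = x. *)
Definition LambertW (x : R) : R :=
  epsilon (inhabits 0) (fun y => -1 < y /\ y * exp y = x).

Definition gauss_expect (f : R -> R) : R :=
  RInt_gen (fun x => f x * (exp (- x ^ 2 / 2) / sqrt (2 * PI)))
           (Rbar_locally m_infty) (Rbar_locally p_infty).

Definition theta (lam gam rho : R) : R := lam * gam * (1 - rho ^ 2).

Definition wfun (T nu mu r eta sigma s0 lam gam rho : R) : R :=
  LambertW (s0 * eta ^ 2 * T
            * exp ((nu - eta * rho * ((mu - r) / sigma) - eta ^ 2 / 2) * T)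
            * theta lam gam rho).

Definition dfun (T nu mu r eta sigma s0 lam gam rho : R) : R :=
  let w := wfun T nu mu r eta sigma s0 lam gam rho in
  lam * exp (- r * T) / (theta lam gam rho * eta ^ 2 * T) * w * (1 + w / 2).

Definition afun (T nu mu r eta sigma s0 lam gam rho : R) : R :=
  let w := wfun T nu mu r eta sigma s0 lam gam rho in
  - (lam * exp (- r * T) / theta lam gam rho)
  * ln (gauss_expect (fun x =>
          exp (- (w / (eta ^ 2 * T))
               * (exp (eta * sqrt T * x) - 1 - eta * sqrt T * x)))).

Definition bfun (T nu mu r eta sigma s0 lam gam rho : R) : R :=
  let w := wfun T nu mu r eta sigma s0 lam gam rho in
  lam * exp (- r * T) / theta lam gam rho * (w / (eta ^ 2 * T))
  * (exp (eta ^ 2 / 2 * T) - 1).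

Definition gfun (T nu mu r eta sigma s0 lam gam rho : R) : R :=
  dfun T nu mu r eta sigma s0 lam gam rho + bfun T nu mu r eta sigma s0 lam gam rho.

Definition e2 (T eta : R) : R :=
  exp (2 * eta ^ 2 * T) - 2 * (1 + eta ^ 2 * T) * exp (eta ^ 2 * T / 2)
  + eta ^ 2 * T + 1.

Definition C1_on (f : R -> R) (lo hi : R) : Prop :=
  forall x, lo < x < hi -> ex_derive f x /\ continuous (Derive f) x.

Definition bounded_on (f : R -> R) (lo hi : R) : Prop :=
  exists M, forall x, lo < x < hi -> Rabs (f x) <= M.

(* Main.v *)
Require Import Defs.
From Stdlib Require Import Reals Lra Lia Psatz ClassicalEpsilon Ranalysis5.
From Coquelicot Require Import Coquelicot.
Open Scope R_scope.

Lemma exRc (f : R -> R) a b : (forall z, Rmin a b <= z <= Rmax a b -> continuous f z) -> ex_RInt f a b.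
Proof. intros; apply (ex_RInt_continuous (V:=R_CompleteNormedModule)); auto. Qed.
Lemma cont_der (f : R -> R) x : ex_derive f x -> continuous f x.
Proof. apply (ex_derive_continuous (K:=R_AbsRing) (V:=R_NormedModule)). Qed.

Lemma RInt_scalR (f : R -> R) a b k : ex_RInt f a b -> RInt (fun x => k * f x) a b = k * RInt f a b.
Proof. intros; apply (RInt_scal (V:=R_CompleteNormedModule)); auto. Qed.

Lemma is_derive_eq (f : R -> R) (x l l' : R) : is_derive f x l -> l = l' -> is_derive f x l'.
Proof. intros H ->; exact H. Qed.

Ltac toR := match goal with |- ?a = ?b => change (@eq R a b) end.

Definition gf (x:R) := exp (- x^2).

Lemma gf_cont x : continuous gf x.
Proof. apply cont_der. unfold gf. auto_derive. exact I. Qed.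

Lemma ex_RInt_gf a b : ex_RInt gf a b.
Proof. apply exRc. intros; apply gf_cont. Qed.

Definition kf (t u : R) := exp (- (t^2 * (1 + u^2))) / (1 + u^2).

Lemma pos1u2 u : 0 < 1 + u^2.
Proof. nra. Qed.

Lemma kf_der t u : is_derive (fun z => kf z u) t (-2 * t * exp (- (t^2*(1+u^2)))).
Proof.
  unfold kf. auto_derive.
  - generalize (pos1u2 u); intros; lra.
  - replace (t * (t * 1) * (1 + u * (u * 1))) with (t^2*(1+u^2)) by ring. field. generalize (pos1u2 u); intros; lra.
Qed.

Lemma kf_cont t u : continuous (kf t) u.
Proof. apply cont_der. unfold kf. auto_derive. generalize (pos1u2 u); lra. Qed.

Lemma F_der t : is_derive (fun t => RInt gf 0 t) t (gf t).
Proof.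
  apply is_derive_RInt with (a := 0).
  - apply filter_forall. intros. apply RInt_correct, ex_RInt_gf.
  - apply gf_cont.
Qed.

Lemma scalR (a b : R) : scal a b = a * b.
Proof. reflexivity. Qed.

Lemma H_der (t : R) : is_derive (fun t => RInt (kf t) 0 1 + (RInt gf 0 t)^2) t 0.
Proof.
  assert (H1 : is_derive (fun t => RInt (fun u => kf t u) 0 1) t
     (RInt (fun u => -2 * t * exp (- (t^2*(1+u^2)))) 0 1)).
  { assert (E : RInt (fun u => -2 * t * exp (- (t^2*(1+u^2)))) 0 1
              = RInt (fun u => Derive (fun z => kf z u) t) 0 1).
    { apply RInt_ext. intros. symmetry. apply is_derive_unique, kf_der. }
    rewrite E.
    apply (is_derive_RInt_param (fun z u => kf z u)).
    - apply filter_forall. intros. eexists. apply kf_der.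
    - intros u _.
      apply continuity_2d_pt_ext with (f := fun z v => -2 * z * exp (- (z^2*(1+v^2)))).
      { intros. symmetry. apply is_derive_unique, kf_der. }
      apply continuity_2d_pt_mult.
      + apply continuity_2d_pt_mult. apply continuity_2d_pt_const. apply continuity_2d_pt_id1.
      + apply continuity_1d_2d_pt_comp with (f := exp) (g := fun z v => - (z^2*(1+v^2))).
        * apply derivable_continuous_pt, derivable_pt_exp.
        * apply continuity_2d_pt_opp. apply continuity_2d_pt_mult.
          -- apply continuity_2d_pt_ext with (f := fun z v => z * (z * 1)).
             intros; simpl; ring.
             apply continuity_2d_pt_mult. apply continuity_2d_pt_id1.
             apply continuity_2d_pt_mult. apply continuity_2d_pt_id1. apply continuity_2d_pt_const.
          -- apply continuity_2d_pt_plus. apply continuity_2d_pt_const.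
             apply continuity_2d_pt_ext with (f := fun z v => v * (v * 1)).
             intros; simpl; ring.
             apply continuity_2d_pt_mult. apply continuity_2d_pt_id2.
             apply continuity_2d_pt_mult. apply continuity_2d_pt_id2. apply continuity_2d_pt_const.
    - apply filter_forall. intros. apply exRc. intros. apply kf_cont. }
  assert (H2 : is_derive (fun t => (RInt gf 0 t)^2) t (2 * RInt gf 0 t * gf t)).
  { assert (Hd := F_der t).
    apply (is_derive_ext (fun t => RInt gf 0 t * RInt gf 0 t)).
    { intros; simpl; ring. }
    replace (2 * RInt gf 0 t * gf t) with (gf t * RInt gf 0 t + RInt gf 0 t * gf t) by ring.
    apply (is_derive_mult (fun t => RInt gf 0 t) (fun t => RInt gf 0 t)); auto.
    intros; apply Rmult_comm. }
  assert (Hs := is_derive_plus _ _ _ _ _ H1 H2).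
  assert (E1 : RInt (fun u => -2 * t * exp (- (t^2*(1+u^2)))) 0 1
          = (-2 * t * exp (- t^2)) * RInt (fun u => gf (t * u)) 0 1).
  { rewrite <- (RInt_scalR (fun u => gf (t*u)) 0 1 (-2 * t * exp (- t^2))).
    2:{ apply exRc. intros. apply (continuous_comp (fun u => t*u) gf).
        apply cont_der. auto_derive. exact I. apply gf_cont. }
    apply RInt_ext. intros. unfold gf.
    rewrite (Rmult_assoc (-2*t)). f_equal. rewrite <- exp_plus. f_equal. ring. }
  assert (E2 : RInt gf 0 t = t * RInt (fun u => gf (t * u)) 0 1).
  { assert (C := RInt_comp_lin gf t 0 0 1 (ex_RInt_gf _ _)).
    replace (t * 0 + 0) with 0 in C by ring. replace (t * 1 + 0) with t in C by ring.
    rewrite <- C. rewrite <- (RInt_scalR (fun u => gf (t*u))).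
    2:{ apply exRc. intros. apply (continuous_comp (fun u => t*u) gf).
        apply cont_der. auto_derive. exact I. apply gf_cont. }
    apply RInt_ext. intros. rewrite Rplus_0_r. reflexivity. }
  assert (Z : plus (RInt (fun u => -2 * t * exp (- (t^2*(1+u^2)))) 0 1) (2 * RInt gf 0 t * gf t) = 0).
  { rewrite E1, E2. unfold plus; simpl. unfold gf. replace (t * (t*1)) with (t^2) by ring. ring. }
  apply (is_derive_eq _ _ _ _ Hs). exact Z.
Qed.

Lemma RInt_ChaslesR (f : R -> R) a b c : ex_RInt f a b -> ex_RInt f b c -> RInt f a b + RInt f b c = RInt f a c.
Proof. intros; apply (RInt_Chasles (V:=R_CompleteNormedModule)); auto. Qed.
Lemma RInt_swapR (f : R -> R) a b : ex_RInt f a b -> - RInt f a b = RInt f b a.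
Proof. intros; apply (opp_RInt_swap (V:=R_CompleteNormedModule)); auto. Qed.
Lemma RInt_pointR (f : R -> R) a : RInt f a a = 0.
Proof. apply (RInt_point (V:=R_CompleteNormedModule)). Qed.
Lemma ballR (x e y : R) : ball x e y <-> Rabs (y - x) < e.
Proof. unfold ball; simpl; unfold AbsRing_ball, abs, minus, plus, opp; simpl. tauto. Qed.

Lemma atan_int : RInt (fun u => / (1 + u^2)) 0 1 = PI / 4.
Proof.
  rewrite (is_RInt_unique _ _ _ (atan 1 - atan 0)). rewrite atan_1, atan_0. lra.
  assert (H := is_RInt_derive (V:=R_CompleteNormedModule) atan (fun u => / (1 + u^2)) 0 1).
  apply H.
  - intros. apply (is_derive_ext atan). reflexivity.
    assert (Ha := is_derive_atan x). unfold Rsqr in Ha. replace (x^2) with (x*x) by ring. exact Ha.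
  - intros. apply cont_der. auto_derive. generalize (pos1u2 x); lra.
Qed.

Lemma H_const t : 0 < t -> RInt (kf t) 0 1 + (RInt gf 0 t)^2 = PI/4.
Proof.
  intros Ht.
  rewrite <- (eq_is_derive (fun t => RInt (kf t) 0 1 + (RInt gf 0 t)^2) 0 t).
  - rewrite RInt_pointR. rewrite <- atan_int. replace (0^2) with 0 by ring. rewrite Rplus_0_r.
    apply RInt_ext. intros. unfold kf. replace (- (0^2 * (1 + x^2))) with 0 by ring. rewrite exp_0. unfold Rdiv. apply Rmult_1_l.
  - intros. apply H_der.
  - exact Ht.
Qed.

Lemma kf_bound t : 0 <= RInt (kf t) 0 1 <= exp (- t^2).
Proof.
  assert (ex : ex_RInt (kf t) 0 1) by (apply exRc; intros; apply kf_cont).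
  split.
  - apply RInt_ge_0; auto. lra. intros. unfold kf. apply Rle_mult_inv_pos. apply Rlt_le, exp_pos. apply pos1u2.
  - replace (exp (- t^2)) with (RInt (fun _ => exp (- t^2)) 0 1).
    apply RInt_le. lra. auto. apply exRc; intros; apply continuous_const.
    intros. unfold kf. assert (P := pos1u2 x).
    assert (exp (- (t^2*(1+x^2))) <= exp (- t^2)).
    { apply exp_le_3 || idtac. destruct (Req_dec (t^2*x^2) 0).
      - right. f_equal. nra.
      - left. apply exp_increasing. nra. }
    apply Rmult_le_reg_r with (1 + x^2). auto. unfold Rdiv. rewrite Rmult_assoc, Rinv_l by lra.
    assert (0 < exp (- t^2)) by apply exp_pos. nra.
    rewrite (RInt_const (V:=R_CompleteNormedModule)). unfold scal; simpl; unfold mult; simpl. ring.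
Qed.

Definition LimP (g : R -> R) l := forall eps, 0 < eps -> exists M, forall x, M < x -> Rabs (g x - l) < eps.
Definition LimM (g : R -> R) l := forall eps, 0 < eps -> exists M, forall x, x < M -> Rabs (g x - l) < eps.

Lemma LimP_filterlim g l : LimP g l -> filterlim g (Rbar_locally p_infty) (locally l).
Proof.
  intros H. apply filterlim_locally. intros eps. destruct (H eps (cond_pos eps)) as [M HM].
  exists M. intros x Hx. apply ballR. auto.
Qed.
Lemma LimM_filterlim g l : LimM g l -> filterlim g (Rbar_locally m_infty) (locally l).
Proof.
  intros H. apply filterlim_locally. intros eps. destruct (H eps (cond_pos eps)) as [M HM].
  exists M. intros x Hx. apply ballR. auto.
Qed.

Lemma exp_neg_le y : 0 <= y -> exp (- y) <= / (1 + y).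
Proof.
  intros Hy. rewrite exp_Ropp. apply Rinv_le_contravar. lra. apply exp_ineq1_le.
Qed.

Lemma sqrtPI_pos : 0 < sqrt PI.
Proof. apply sqrt_lt_R0, PI_RGT_0. Qed.

Lemma F_nonneg t : 0 <= t -> 0 <= RInt gf 0 t.
Proof. intros. apply RInt_ge_0; auto. apply ex_RInt_gf. intros; unfold gf; apply Rlt_le, exp_pos. Qed.

Lemma F_limP : LimP (fun t => RInt gf 0 t) (sqrt PI / 2).
Proof.
  intros eps He. set (s := sqrt PI / 2).
  assert (Hs : 0 < s) by (unfold s; generalize sqrtPI_pos; lra).
  assert (Hs2 : s * s = PI / 4).
  { unfold s. replace (sqrt PI / 2 * (sqrt PI / 2)) with (sqrt PI * sqrt PI / 4) by field.
    rewrite sqrt_sqrt. lra. generalize PI_RGT_0; lra. }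
  exists (Rmax 1 (/ (eps * s))). intros x Hx.
  assert (H1 : 1 < x) by (generalize (Rmax_l 1 (/ (eps * s))); lra).
  assert (H2 : / (eps * s) < x) by (generalize (Rmax_r 1 (/ (eps * s))); lra).
  assert (Hc := H_const x ltac:(lra)).
  assert (Hb := kf_bound x).
  assert (HF := F_nonneg x ltac:(lra)).
  set (F := RInt gf 0 x) in *. set (k := RInt (kf x) 0 1) in *.
  assert (Hk : k < eps * s).
  { apply Rle_lt_trans with (exp (- x^2)). tauto.
    apply Rle_lt_trans with (/ (1 + x^2)). apply exp_neg_le. nra.
    apply Rlt_le_trans with (/ x). apply Rinv_lt_contravar. nra. nra.
    rewrite <- (Rinv_inv (eps * s)). apply Rinv_le_contravar. apply Rinv_0_lt_compat. nra. lra. }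
  assert (E : (F - s) * (F + s) = - k) by (simpl in Hc; nra).
  rewrite Rabs_left1.
  - assert (F - s = - k / (F + s)) by (field_simplify_eq; [lra| lra]).
    rewrite H. apply Rmult_lt_reg_r with (F + s). lra.
    field_simplify. 2: lra. assert (0 <= k) by tauto. nra.
  - nra.
Qed.

Lemma F_odd s : RInt gf 0 (-s) = - RInt gf 0 s.
Proof.
  assert (C := RInt_comp_lin (V:=R_CompleteNormedModule) gf (-1) 0 0 s (ex_RInt_gf _ _)).
  replace (-1 * 0 + 0) with 0 in C by ring. replace (-1 * s + 0) with (-s) in C by ring.
  rewrite <- C.
  rewrite (RInt_ext _ (fun y => -1 * gf y)).
  rewrite RInt_scalR. toR; ring. apply ex_RInt_gf.
  intros. unfold gf. unfold scal; simpl; unfold mult; simpl. f_equal. f_equal. ring.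
Qed.

Definition phi (x : R) := exp (- x ^ 2 / 2) / sqrt (2 * PI).
Definition Phi (t : R) := RInt gf 0 (t / sqrt 2) / sqrt PI.

Lemma sqrt2_pos : 0 < sqrt 2.
Proof. apply sqrt_lt_R0. lra. Qed.

Lemma Phi_der (t : R) : is_derive Phi t (phi t).
Proof.
  unfold Phi.
  assert (Hd : is_derive (fun t => RInt gf 0 (t / sqrt 2)) t (/ sqrt 2 * gf (t / sqrt 2))).
  { apply (is_derive_comp (fun u => RInt gf 0 u) (fun t => t / sqrt 2)).
    apply F_der. auto_derive. auto. field. generalize sqrt2_pos; lra. }
  apply (is_derive_ext (fun t => / sqrt PI * RInt gf 0 (t / sqrt 2))). intros; unfold Rdiv; toR; ring.
  apply is_derive_eq with (/ sqrt PI * (/ sqrt 2 * gf (t / sqrt 2))).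
  apply (is_derive_scal (fun t => RInt gf 0 (t / sqrt 2))). exact Hd.
  unfold phi, gf. rewrite sqrt_mult by (generalize PI_RGT_0; lra).
  replace (- (t / sqrt 2) ^ 2) with (- t^2 / 2).
  field. split. generalize sqrtPI_pos; lra. generalize sqrt2_pos; lra.
  unfold Rdiv. rewrite Rpow_mult_distr. rewrite pow_inv. replace (sqrt 2 ^ 2) with 2. ring.
  simpl. rewrite Rmult_1_r, sqrt_sqrt; lra.
Qed.

Lemma phi_cont (x : R) : continuous phi x.
Proof. apply cont_der. unfold phi. auto_derive. auto. Qed.

Lemma LimP_shift g l s : LimP g l -> LimP (fun x => g (x - s)) l.
Proof. intros H eps He. destruct (H eps He) as [M HM]. exists (M + s). intros. apply HM. lra. Qed.
Lemma LimM_shift g l s : LimM g l -> LimM (fun x => g (x - s)) l.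
Proof. intros H eps He. destruct (H eps He) as [M HM]. exists (M + s). intros. apply HM. lra. Qed.

Lemma LimP_plus f g a b : LimP f a -> LimP g b -> LimP (fun x => f x + g x) (a + b).
Proof.
  intros Hf Hg eps He. destruct (Hf (eps/2) ltac:(lra)) as [M1 H1]. destruct (Hg (eps/2) ltac:(lra)) as [M2 H2].
  exists (Rmax M1 M2). intros x Hx. specialize (H1 x (Rle_lt_trans _ _ _ (Rmax_l _ _) Hx)).
  specialize (H2 x (Rle_lt_trans _ _ _ (Rmax_r _ _) Hx)).
  replace (f x + g x - (a + b)) with ((f x - a) + (g x - b)) by ring.
  eapply Rle_lt_trans. apply Rabs_triang. lra.
Qed.
Lemma LimM_plus f g a b : LimM f a -> LimM g b -> LimM (fun x => f x + g x) (a + b).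
Proof.
  intros Hf Hg eps He. destruct (Hf (eps/2) ltac:(lra)) as [M1 H1]. destruct (Hg (eps/2) ltac:(lra)) as [M2 H2].
  exists (Rmin M1 M2). intros x Hx. specialize (H1 x (Rlt_le_trans _ _ _ Hx (Rmin_l _ _))).
  specialize (H2 x (Rlt_le_trans _ _ _ Hx (Rmin_r _ _))).
  replace (f x + g x - (a + b)) with ((f x - a) + (g x - b)) by ring.
  eapply Rle_lt_trans. apply Rabs_triang. lra.
Qed.
Lemma LimP_scal f a k : LimP f a -> LimP (fun x => k * f x) (k * a).
Proof.
  intros Hf eps He. destruct (Hf (eps / (Rabs k + 1))) as [M HM].
  apply Rdiv_lt_0_compat; auto. generalize (Rabs_pos k); lra.
  exists M. intros x Hx. specialize (HM x Hx).
  replace (k * f x - k * a) with (k * (f x - a)) by ring. rewrite Rabs_mult.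
  assert (0 <= Rabs k) by apply Rabs_pos.
  apply Rle_lt_trans with ((Rabs k + 1) * Rabs (f x - a)). 
  assert (0 <= Rabs (f x - a)) by apply Rabs_pos. nra.
  apply Rmult_lt_reg_r with (/ (Rabs k + 1)). apply Rinv_0_lt_compat; lra.
  replace ((Rabs k + 1) * Rabs (f x - a) * / (Rabs k + 1)) with (Rabs (f x - a)) by (field; lra).
  exact HM.
Qed.
Lemma LimM_scal f a k : LimM f a -> LimM (fun x => k * f x) (k * a).
Proof.
  intros Hf eps He. destruct (Hf (eps / (Rabs k + 1))) as [M HM].
  apply Rdiv_lt_0_compat; auto. generalize (Rabs_pos k); lra.
  exists M. intros x Hx. specialize (HM x Hx).
  replace (k * f x - k * a) with (k * (f x - a)) by ring. rewrite Rabs_mult.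
  assert (0 <= Rabs k) by apply Rabs_pos.
  apply Rle_lt_trans with ((Rabs k + 1) * Rabs (f x - a)). 
  assert (0 <= Rabs (f x - a)) by apply Rabs_pos. nra.
  apply Rmult_lt_reg_r with (/ (Rabs k + 1)). apply Rinv_0_lt_compat; lra.
  replace ((Rabs k + 1) * Rabs (f x - a) * / (Rabs k + 1)) with (Rabs (f x - a)) by (field; lra).
  exact HM.
Qed.
Lemma LimP_ext f g a : (forall x, f x = g x) -> LimP f a -> LimP g a.
Proof. intros E H eps He. destruct (H eps He) as [M HM]. exists M. intros. rewrite <- E. auto. Qed.
Lemma LimM_ext f g a : (forall x, f x = g x) -> LimM f a -> LimM g a.
Proof. intros E H eps He. destruct (H eps He) as [M HM]. exists M. intros. rewrite <- E. auto. Qed.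

Lemma Phi_limP : LimP Phi (1/2).
Proof.
  intros eps He. destruct (F_limP (eps * sqrt PI)) as [M HM].
  generalize sqrtPI_pos; nra.
  exists (M * sqrt 2). intros x Hx.
  assert (M < x / sqrt 2).
  { apply Rmult_lt_reg_r with (sqrt 2). apply sqrt2_pos. unfold Rdiv. rewrite Rmult_assoc, Rinv_l. lra.
    generalize sqrt2_pos; lra. }
  specialize (HM _ H). unfold Phi.
  replace (RInt gf 0 (x / sqrt 2) / sqrt PI - 1 / 2) with ((RInt gf 0 (x / sqrt 2) - sqrt PI / 2) / sqrt PI)
    by (field; generalize sqrtPI_pos; lra).
  unfold Rdiv at 1. rewrite Rabs_mult. rewrite Rabs_inv. rewrite (Rabs_right (sqrt PI)).
  apply Rmult_lt_reg_r with (sqrt PI). apply sqrtPI_pos. rewrite Rmult_assoc, Rinv_l. lra.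
  generalize sqrtPI_pos; lra. generalize sqrtPI_pos; lra.
Qed.

Lemma Phi_odd x : Phi (- x) = - Phi x.
Proof. unfold Phi. replace (- x / sqrt 2) with (- (x / sqrt 2)) by (field; generalize sqrt2_pos; lra).
  rewrite F_odd. field. generalize sqrtPI_pos; lra. Qed.

Lemma Phi_limM : LimM Phi (-1/2).
Proof.
  intros eps He. destruct (Phi_limP eps He) as [M HM]. exists (- M). intros x Hx.
  replace x with (- (- x)) by ring. rewrite Phi_odd.
  replace (- Phi (- x) - -1/2) with (- (Phi (-x) - 1/2)) by lra. rewrite Rabs_Ropp. apply HM. lra.
Qed.

Lemma xphi_bound x : Rabs x * exp (- x^2/2) <= 2 / Rabs x \/ x = 0.
Proof.
  destruct (Req_dec x 0). right; auto. left.
  assert (0 < Rabs x) by (apply Rabs_pos_lt; auto).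
  assert (Hx2 : Rabs x * Rabs x = x^2) by (rewrite <- Rabs_mult; simpl; rewrite Rmult_1_r; apply Rabs_right; nra).
  assert (E := exp_neg_le (x^2/2) ltac:(nra)).
  replace (- x^2/2) with (- (x^2/2)) by field.
  apply Rle_trans with (Rabs x * / (1 + x^2/2)). apply Rmult_le_compat_l; lra.
  apply Rmult_le_reg_r with (1 + x^2/2). nra. 
  replace (Rabs x * / (1 + x ^ 2 / 2) * (1 + x ^ 2 / 2)) with (Rabs x) by (field; nra).
  unfold Rdiv. rewrite Rmult_assoc. rewrite Rmult_plus_distr_l. rewrite <- Hx2.
  replace (/ Rabs x * (Rabs x * Rabs x * / 2)) with (Rabs x / 2) by (field; lra).
  assert (0 < / Rabs x) by (apply Rinv_0_lt_compat; lra). nra.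
Qed.

Lemma phi_small x : 1 <= Rabs x -> Rabs (phi x) <= 2 / Rabs x /\ Rabs (x * phi x) <= 2 / Rabs x.
Proof.
  intros Hx. assert (S : 1 <= sqrt (2 * PI)).
  { rewrite <- sqrt_1. apply sqrt_le_1_alt. generalize PI_RGT_0. generalize (PI2_1). lra. }
  assert (Hp : 0 <= phi x) by (unfold phi; apply Rle_mult_inv_pos; [apply Rlt_le, exp_pos | lra]).
  assert (Hq : phi x <= exp (- x^2/2)).
  { unfold phi. unfold Rdiv. rewrite <- (Rmult_1_r (exp (- x^2/2))) at 2. apply Rmult_le_compat_l.
    apply Rlt_le, exp_pos. rewrite <- Rinv_1. apply Rinv_le_contravar; lra. }
  destruct (xphi_bound x) as [B|B]; [|subst x; rewrite Rabs_R0 in Hx; lra].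
  rewrite Rabs_mult. rewrite (Rabs_right (phi x)) by lra. split.
  - apply Rle_trans with (Rabs x * phi x). nra. apply Rle_trans with (Rabs x * exp (- x^2/2)); auto. nra.
  - apply Rle_trans with (Rabs x * exp (- x^2/2)); auto. nra.
Qed.

Lemma phi_limP : LimP phi 0 /\ LimM phi 0 /\ LimP (fun x => x * phi x) 0 /\ LimM (fun x => x * phi x) 0.
Proof.
  assert (K : forall eps, 0 < eps -> forall x, Rmax 1 (2/eps) < Rabs x -> Rabs (phi x - 0) < eps /\ Rabs (x * phi x - 0) < eps).
  { intros eps He x Hx. rewrite !Rminus_0_r.
    assert (1 <= Rabs x) by (generalize (Rmax_l 1 (2/eps)); lra).
    assert (2/eps < Rabs x) by (generalize (Rmax_r 1 (2/eps)); lra).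
    destruct (phi_small x H) as [A B].
    assert (2 / Rabs x < eps).
    { apply Rmult_lt_reg_r with (Rabs x). lra. unfold Rdiv. rewrite Rmult_assoc, Rinv_l by lra.
      apply Rmult_lt_reg_r with (/ eps). apply Rinv_0_lt_compat; lra.
      replace (eps * Rabs x * / eps) with (Rabs x) by (field; lra). lra. }
    lra. }
  repeat split; intros eps He.
  - exists (Rmax 1 (2/eps)). intros. apply K; auto. rewrite Rabs_right; lra || (generalize (Rmax_l 1 (2/eps)); lra).
  - exists (- Rmax 1 (2/eps)). intros. apply K; auto. rewrite Rabs_left; lra || (generalize (Rmax_l 1 (2/eps)); lra).
  - exists (Rmax 1 (2/eps)). intros. apply K; auto. rewrite Rabs_right; lra || (generalize (Rmax_l 1 (2/eps)); lra).
  - exists (- Rmax 1 (2/eps)). intros. apply K; auto. rewrite Rabs_left; lra || (generalize (Rmax_l 1 (2/eps)); lra).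
Qed.

Notation IG f l := (is_RInt_gen f (Rbar_locally m_infty) (Rbar_locally p_infty) l).

Lemma IG_ext (f g : R -> R) (l : R) : (forall x, f x = g x) -> IG f l -> IG g l.
Proof.
  intros E H. apply (is_RInt_gen_ext f). apply filter_forall. intros. apply E. exact H.
Qed.
Lemma IG_eqv (f : R -> R) (l l' : R) : IG f l -> l = l' -> IG f l'.
Proof. intros H ->; exact H. Qed.
Lemma IG_plus (f g : R -> R) (a b : R) : IG f a -> IG g b -> IG (fun x => f x + g x) (a + b).
Proof. intros Hf Hg. exact (is_RInt_gen_plus f g a b Hf Hg). Qed.
Lemma IG_scal (f : R -> R) (a k : R) : IG f a -> IG (fun x => k * f x) (k * a).
Proof. intros Hf. exact (is_RInt_gen_scal f k a Hf). Qed.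

Lemma IG_deriv (F f : R -> R) (la lb : R) : (forall x, is_derive F x (f x)) -> (forall x, continuous f x) ->
  LimM F la -> LimP F lb -> IG f (lb - la).
Proof.
  intros HD HC HM HP.
  apply (is_RInt_gen_ext (Derive F)).
  - apply filter_forall. intros. apply is_derive_unique, HD.
  - apply is_RInt_gen_Derive.
    + apply filter_forall. intros. eexists; apply HD.
    + apply filter_forall. intros. apply (continuous_ext f). intros; symmetry; apply is_derive_unique, HD. apply HC.
    + apply LimM_filterlim; auto.
    + apply LimP_filterlim; auto.
Qed.

Lemma phi_der (y : R) : is_derive phi y (- y * phi y).
Proof.
  unfold phi. auto_derive. auto.
  toR. replace (- (y * (y * 1)) * / 2) with (- y^2 / 2) by field. field.
  apply Rgt_not_eq, sqrt_lt_R0. generalize PI_RGT_0; lra.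
Qed.

Lemma IG_phi_shift s : IG (fun x => phi (x - s)) 1.
Proof.
  apply IG_eqv with (1/2 - -1/2); [|lra].
  apply (IG_deriv (fun x => Phi (x - s))).
  - intros. apply is_derive_eq with (1 * phi (x - s)); [|ring].
    apply (is_derive_comp Phi (fun x => x - s)). apply Phi_der. auto_derive; auto; try (toR; ring).
  - intros. apply (continuous_comp (fun x => x - s) phi). apply cont_der; auto_derive; auto. apply phi_cont.
  - apply (LimM_shift Phi). apply Phi_limM.
  - apply (LimP_shift Phi). apply Phi_limP.
Qed.

Lemma IG_xphi_shift s : IG (fun x => (x - s) * phi (x - s)) 0.
Proof.
  destruct phi_limP as (A & B & C & D).
  apply IG_eqv with (-1 * 0 - -1 * 0); [|ring].
  apply (IG_deriv (fun x => -1 * phi (x - s))).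
  - intros. apply is_derive_eq with (-1 * (1 * (- (x - s) * phi (x - s)))); [|ring].
    apply (is_derive_scal (fun x => phi (x - s))).
    apply (is_derive_comp phi (fun x => x - s)). apply phi_der. auto_derive; auto; try (toR; ring).
  - intros. apply (continuous_mult (fun x => x - s) (fun x => phi (x - s))).
    apply cont_der; auto_derive; auto.
    apply (continuous_comp (fun x => x - s) phi). apply cont_der; auto_derive; auto. apply phi_cont.
  - apply LimM_scal. apply (LimM_shift phi). auto.
  - apply LimP_scal. apply (LimP_shift phi). auto.
Qed.

Lemma IG_x2phi : IG (fun x => x^2 * phi x) 1.
Proof.
  destruct phi_limP as (A & B & C & D).
  apply IG_eqv with ((1/2 + -1 * 0) - (-1/2 + -1 * 0)); [|lra].
  apply (IG_deriv (fun x => Phi x + -1 * (x * phi x))).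
  - intros. apply is_derive_eq with (phi x + -1 * (1 * phi x + x * (- x * phi x))); [|ring].
    apply (is_derive_plus Phi). apply Phi_der. apply (is_derive_scal (fun x => x * phi x)).
    apply (is_derive_mult (fun x => x) phi). apply (is_derive_id (K:=R_AbsRing)). apply phi_der.
    intros; apply Rmult_comm.
  - intros. apply (continuous_mult (fun x => x^2) phi). apply cont_der; auto_derive; auto. apply phi_cont.
  - apply LimM_plus. apply Phi_limM. apply LimM_scal. auto.
  - apply LimP_plus. apply Phi_limP. apply LimP_scal. auto.
Qed.

Lemma IG_phi : IG phi 1.
Proof. apply IG_ext with (fun x => phi (x - 0)). intros; f_equal; ring. apply IG_phi_shift. Qed.

Lemma IG_xphi : IG (fun x => x * phi x) 0.
Proof. apply IG_ext with (fun x => (x - 0) * phi (x - 0)). intros; rewrite Rminus_0_r; auto. apply IG_xphi_shift. Qed.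

Lemma exp_phi_shift k x : exp (k * x) * phi x = exp (k^2/2) * phi (x - k).
Proof. unfold phi, Rdiv. rewrite <- !Rmult_assoc, <- !exp_plus. f_equal. f_equal. field. Qed.

Lemma IG_expphi k : IG (fun x => exp (k * x) * phi x) (exp (k^2/2)).
Proof.
  apply IG_eqv with (exp (k^2/2) * 1); [|ring].
  apply IG_ext with (fun x => exp (k^2/2) * phi (x - k)). intros; symmetry; apply exp_phi_shift.
  apply IG_scal. apply IG_phi_shift.
Qed.

Lemma IG_xexpphi k : IG (fun x => x * exp (k * x) * phi x) (k * exp (k^2/2)).
Proof.
  apply IG_eqv with (exp (k^2/2) * (0 + k * 1)); [|ring].
  apply IG_ext with (fun x => exp (k^2/2) * ((x - k) * phi (x - k) + k * phi (x - k))).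
  intros. rewrite Rmult_assoc, exp_phi_shift. ring.
  apply IG_scal. apply IG_plus. apply IG_xphi_shift. apply IG_scal. apply IG_phi_shift.
Qed.

Definition Yf (c s x : R) := c * (exp (s * x) - 1 - s * x).

Lemma IG_Y c s : IG (fun x => Yf c s x * phi x) (c * (exp (s^2/2) - 1)).
Proof.
  apply IG_eqv with (c * ((exp (s^2/2) + -1 * 1) + - s * 0)); [|ring].
  apply IG_ext with (fun x => c * ((exp (s * x) * phi x + -1 * phi x) + - s * (x * phi x))).
  intros; unfold Yf; ring.
  apply IG_scal. apply IG_plus. apply IG_plus. apply IG_expphi. apply IG_scal. apply IG_phi.
  apply IG_scal. apply IG_xphi.
Qed.

Lemma IG_Y2 c s : IG (fun x => (Yf c s x)^2 * phi x)
  (c^2 * (exp (2 * s^2) - 2 * (1 + s^2) * exp (s^2/2) + s^2 + 1)).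
Proof.
  apply IG_eqv with (c^2 * (exp ((2*s)^2/2) + -2 * exp (s^2/2) + -2 * s * (s * exp (s^2/2))
     + 1 + 2 * s * 0 + s^2 * 1)).
  2:{ replace ((2*s)^2/2) with (2 * s^2) by field. ring. }
  apply IG_ext with (fun x => c^2 * (exp ((2*s) * x) * phi x + -2 * (exp (s * x) * phi x)
     + -2 * s * (x * exp (s * x) * phi x) + phi x + 2 * s * (x * phi x) + s^2 * (x^2 * phi x))).
  { intros. unfold Yf. replace (exp (2 * s * x)) with (exp (s * x) * exp (s * x)).
    ring. rewrite <- exp_plus. f_equal. ring. }
  apply IG_scal. apply IG_plus. apply IG_plus. apply IG_plus. apply IG_plus. apply IG_plus.
  apply IG_expphi. apply IG_scal, IG_expphi. apply IG_scal, IG_xexpphi. apply IG_phi.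
  apply IG_scal, IG_xphi. apply IG_scal, IG_x2phi.
Qed.

Notation FP := (filter_prod (Rbar_locally m_infty) (Rbar_locally p_infty)).

Lemma IG_RInt (f : R -> R) (l : R) : (forall x, continuous f x) ->
  (IG f l <-> filterlim (fun ab => RInt f (fst ab) (snd ab)) FP (locally l)).
Proof.
  intros Hc. unfold is_RInt_gen, filterlimi, filterlim, filter_le, filtermapi, filtermap.
  split; intros H P HP; specialize (H P HP); revert H; apply filter_imp; intros [a b]; simpl.
  - intros [y [Hy Py]]. rewrite (is_RInt_unique _ _ _ _ Hy). auto.
  - intros Py. exists (RInt f a b). split; auto. apply (RInt_correct (V:=R_CompleteNormedModule)).
    apply exRc. intros; auto.
Qed.

Lemma FP_quad (M1 M2 : R) : FP (fun ab => fst ab < M1 /\ M2 < snd ab).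
Proof.
  apply (Filter_prod _ _ _ (fun a => a < M1) (fun b => M2 < b)).
  exists M1; auto. exists M2; auto. intros; simpl; auto.
Qed.

Lemma IG_le (f g : R -> R) (lf lg : R) : (forall x, continuous f x) -> (forall x, continuous g x) ->
  (forall x, f x <= g x) -> IG f lf -> IG g lg -> lf <= lg.
Proof.
  intros Cf Cg Hle Hf Hg. apply IG_RInt in Hf; auto. apply IG_RInt in Hg; auto.
  apply (filterlim_le (F:=FP) (fun ab => RInt f (fst ab) (snd ab)) (fun ab => RInt g (fst ab) (snd ab)) lf lg); auto.
  eapply filter_imp; [|apply (FP_quad 0 0)]. intros [a b] [Ha Hb]; simpl in *.
  apply RInt_le. lra. apply exRc; auto. apply exRc; auto. intros; auto.
Qed.

Lemma RInt_dom_abs (f g : R -> R) a b : (forall x, continuous f x) -> (forall x, continuous g x) ->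
  (forall x, 0 <= f x <= g x) -> Rabs (RInt f a b) <= Rabs (RInt g a b).
Proof.
  intros Cf Cg H.
  assert (K : forall a b, a <= b -> 0 <= RInt f a b <= RInt g a b).
  { intros u v Huv. split. apply RInt_ge_0; auto. apply exRc; auto. intros; apply H.
    apply RInt_le; auto. apply exRc; auto. apply exRc; auto. intros; apply H. }
  destruct (Rle_dec a b) as [Hab|Hab].
  - destruct (K a b Hab). rewrite !Rabs_right; lra.
  - destruct (K b a ltac:(lra)).
    rewrite <- (RInt_swapR f b a), <- (RInt_swapR g b a) by (apply exRc; auto).
    rewrite !Rabs_Ropp, !Rabs_right; lra.
Qed.

Lemma IG_dom (f g : R -> R) (lg : R) : (forall x, continuous f x) -> (forall x, continuous g x) ->
  (forall x, 0 <= f x <= g x) -> IG g lg -> exists lf, IG f lf.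
Proof.
  intros Cf Cg H Hg. apply IG_RInt in Hg; auto.
  assert (exf : forall a b, ex_RInt f a b) by (intros; apply exRc; auto).
  assert (exg : forall a b, ex_RInt g a b) by (intros; apply exRc; auto).
  assert (Y : exists y, filterlim (fun ab => RInt f (fst ab) (snd ab)) FP (locally y)).
  { apply (filterlim_locally_cauchy (F:=FP)).
    intros eps.
    assert (He : 0 < eps / 4) by (generalize (cond_pos eps); lra).
    destruct (proj1 (filterlim_locally _ _) Hg (mkposreal _ He)) as [Q R HQ HR HQR].
    destruct HQ as [M1 HM1]. destruct HR as [M2 HM2].
    exists (fun ab => fst ab < M1 /\ M2 < snd ab). split. apply FP_quad.
    intros [a b] [a' b'] [Ha Hb] [Ha' Hb']. simpl in *. apply ballR.
    assert (B : forall u v, u < M1 -> M2 < v -> Rabs (RInt g u v - lg) < eps / 4).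
    { intros u v Hu Hv. specialize (HQR u v (HM1 u Hu) (HM2 v Hv)). apply ballR in HQR. exact HQR. }
    assert (E1 : RInt f a' b' - RInt f a b = RInt f a' a + RInt f b b').
    { rewrite <- (RInt_ChaslesR f a' a b'), <- (RInt_ChaslesR f a b b') by auto. toR; lra. }
    assert (E2 : RInt g a' a = RInt g a' b - RInt g a b).
    { rewrite <- (RInt_ChaslesR g a' a b) by auto. toR; lra. }
    assert (E3 : RInt g b b' = RInt g a b' - RInt g a b).
    { rewrite <- (RInt_ChaslesR g a b b') by auto. toR; lra. }
    rewrite E1.
    eapply Rle_lt_trans. apply Rabs_triang.
    assert (D1 := RInt_dom_abs f g a' a Cf Cg H). assert (D2 := RInt_dom_abs f g b b' Cf Cg H).
    rewrite E2 in D1. rewrite E3 in D2.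
    assert (B1 := B a' b Ha' Hb). assert (B2 := B a b Ha Hb). assert (B3 := B a b' Ha Hb').
    assert (Rabs (RInt g a' b - RInt g a b) < eps / 2).
    { replace (RInt g a' b - RInt g a b) with ((RInt g a' b - lg) - (RInt g a b - lg)) by ring.
      eapply Rle_lt_trans. apply Rabs_triang_inv2 || apply Rabs_triang. rewrite Rabs_Ropp. lra. }
    assert (Rabs (RInt g a b' - RInt g a b) < eps / 2).
    { replace (RInt g a b' - RInt g a b) with ((RInt g a b' - lg) + - (RInt g a b - lg)) by ring.
      eapply Rle_lt_trans. apply Rabs_triang. rewrite Rabs_Ropp. lra. }
    lra. }
  destruct Y as [y Hy]. exists y. apply IG_RInt; auto.
Qed.

Lemma exp_quad y : 0 <= y -> exp (- y) <= 1 - y + y^2/2.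
Proof.
  intros Hy.
  destruct (MVT_gen (fun t => exp t * (1 - t + t^2/2)) 0 y (fun t => exp t * t^2/2)) as [c [Hc E]].
  - intros. auto_derive; auto. toR. field.
  - intros. apply continuity_pt_filterlim. apply (cont_der (fun t => exp t * (1 - t + t^2/2))). auto_derive. auto.
  - rewrite exp_0 in E. rewrite Rmin_left, Rmax_right in Hc by lra.
    assert (0 <= exp c * c^2/2 * (y - 0)). { apply Rmult_le_pos; [|lra]. unfold Rdiv. apply Rmult_le_pos; [|lra]. apply Rmult_le_pos. apply Rlt_le, exp_pos. nra. }
    assert (1 <= exp y * (1 - y + y^2/2)) by lra.
    rewrite exp_Ropp. assert (0 < exp y) by apply exp_pos.
    apply Rmult_le_reg_l with (exp y); auto. rewrite Rinv_r by lra. lra.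
Qed.

Lemma phi_pos x : 0 < phi x.
Proof. unfold phi. apply Rdiv_lt_0_compat. apply exp_pos. apply sqrt_lt_R0. generalize PI_RGT_0; lra. Qed.

Lemma Yf_nonneg c s x : 0 <= c -> 0 <= Yf c s x.
Proof. intros. unfold Yf. generalize (exp_ineq1_le (s * x)). nra. Qed.

Ltac contR := apply cont_der; unfold phi, Yf; auto_derive; repeat split;
  try (apply Rgt_not_eq, sqrt_lt_R0; generalize PI_RGT_0; lra); auto.

Definition zf c s x := exp (- c * (exp (s * x) - 1 - s * x)) * (exp (- x ^ 2 / 2) / sqrt (2 * PI)).

Lemma Z_bounds c s : 0 <= c ->
  let Z := RInt_gen (zf c s) (Rbar_locally m_infty) (Rbar_locally p_infty) in
  let m := c * (exp (s^2/2) - 1) in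
  let q := c^2 * (exp (2 * s^2) - 2 * (1 + s^2) * exp (s^2/2) + s^2 + 1) / 2 in
  0 < Z /\ Z <= 1 /\ exp (- m) <= Z /\ Z <= 1 - m + q.
Proof.
  intros Hc Z m q.
  assert (Ez : forall x, zf c s x = exp (- Yf c s x) * phi x).
  { intros. unfold zf, Yf, phi. f_equal. f_equal. ring. }
  assert (Cz : forall x, continuous (zf c s) x) by (intros; unfold zf; contR).
  assert (Cp : forall x, continuous phi x) by apply phi_cont.
  destruct (IG_dom (zf c s) phi 1 Cz Cp) as [lz Hz].
  { intros x. rewrite Ez. generalize (phi_pos x) (Yf_nonneg c s x Hc). intros.
    split. apply Rmult_le_pos. apply Rlt_le, exp_pos. lra.
    rewrite <- (Rmult_1_l (phi x)) at 2. apply Rmult_le_compat_r. lra.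
    rewrite <- exp_0. apply exp_le_3 || (destruct (Req_dec (Yf c s x) 0) as [E|E];
      [rewrite E, Ropp_0; lra | left; apply exp_increasing; lra]). }
  apply IG_phi.
  assert (EZ : Z = lz).
  { unfold Z. apply (is_RInt_gen_unique (V:=R_CompleteNormedModule)). exact Hz. }
  rewrite EZ.
  assert (H1 : lz <= 1).
  { apply (IG_le (zf c s) phi); auto.
    intros x. rewrite Ez. generalize (phi_pos x) (Yf_nonneg c s x Hc). intros.
    rewrite <- (Rmult_1_l (phi x)) at 2. apply Rmult_le_compat_r. lra.
    rewrite <- exp_0. destruct (Req_dec (Yf c s x) 0) as [E|E];
      [rewrite E, Ropp_0; lra | left; apply exp_increasing; lra].
    apply IG_phi. }
  assert (H2 : exp (- m) <= lz).
  { apply (IG_le (fun x => exp (- m) * ((1 + m) * phi x + -1 * (Yf c s x * phi x))) (zf c s)); auto.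
    - intros; contR.
    - intros x. rewrite Ez. generalize (phi_pos x). intros.
      replace (exp (- m) * ((1 + m) * phi x + -1 * (Yf c s x * phi x)))
        with ((exp (- m) * (1 + (m - Yf c s x))) * phi x) by ring.
      apply Rmult_le_compat_r. lra.
      replace (exp (- Yf c s x)) with (exp (- m) * exp (m - Yf c s x)) by (rewrite <- exp_plus; f_equal; ring).
      apply Rmult_le_compat_l. apply Rlt_le, exp_pos. apply exp_ineq1_le.
    - apply IG_eqv with (exp (- m) * ((1 + m) * 1 + -1 * m)); [|ring].
      apply IG_scal. apply IG_plus. apply IG_scal. apply IG_phi. apply IG_scal. apply IG_Y. }
  assert (H3 : lz <= 1 - m + q).
  { apply (IG_le (zf c s) (fun x => phi x + -1 * (Yf c s x * phi x) + /2 * ((Yf c s x)^2 * phi x))); auto.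
    - intros; contR.
    - intros x. rewrite Ez. generalize (phi_pos x) (Yf_nonneg c s x Hc). intros.
      replace (phi x + -1 * (Yf c s x * phi x) + /2 * ((Yf c s x)^2 * phi x))
        with ((1 - Yf c s x + (Yf c s x)^2/2) * phi x) by field.
      apply Rmult_le_compat_r. lra. apply exp_quad. auto.
    - apply IG_eqv with (1 + -1 * m + /2 * (c^2 * (exp (2 * s^2) - 2 * (1 + s^2) * exp (s^2/2) + s^2 + 1))).
      2:{ unfold q. field. }
      apply IG_plus. apply IG_plus. apply IG_phi. apply IG_scal. apply IG_Y. apply IG_scal. apply IG_Y2. }
  repeat split; auto.
  apply Rlt_le_trans with (exp (- m)); auto. apply exp_pos.
Qed.

Lemma a_ineq (K c s A b q' : R) : 0 < K -> 0 <= c ->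
  A = - K * ln (RInt_gen (zf c s) (Rbar_locally m_infty) (Rbar_locally p_infty)) ->
  b = K * (c * (exp (s^2/2) - 1)) ->
  q' = K * (c^2 * (exp (2 * s^2) - 2 * (1 + s^2) * exp (s^2/2) + s^2 + 1) / 2) ->
  Rmax (b - q') 0 <= A /\ A <= b.
Proof.
  intros HK Hc EA Eb Eq.
  destruct (Z_bounds c s Hc) as (P & L1 & L2 & L3). cbv zeta in *.
  set (Z := RInt_gen (zf c s) (Rbar_locally m_infty) (Rbar_locally p_infty)) in *.
  set (m := c * (exp (s^2/2) - 1)) in *.
  set (q := c^2 * (exp (2 * s^2) - 2 * (1 + s^2) * exp (s^2/2) + s^2 + 1) / 2) in *.
  assert (Ln1 : ln Z <= 0). { rewrite <- ln_1. apply ln_le; lra. }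
  assert (Ln2 : - m <= ln Z). { rewrite <- (ln_exp (- m)). apply ln_le; auto. apply exp_pos. }
  assert (Ln3 : ln Z <= Z - 1). { generalize (exp_ineq1_le (ln Z)). rewrite exp_ln; lra. }
  subst A b q'. split.
  - apply Rmax_lub. 
    + replace (- K * ln Z) with (K * (- ln Z)) by ring.
      apply Rle_trans with (K * (m - q)). unfold m, q. right. field.
      apply Rmult_le_compat_l; lra.
    + replace (- K * ln Z) with (K * (- ln Z)) by ring. apply Rmult_le_pos; lra.
  - replace (- K * ln Z) with (K * (- ln Z)) by ring. apply Rmult_le_compat_l; unfold m in *; lra.
Qed.

Lemma fexp_incr a b : 0 <= a -> a < b -> a * exp a < b * exp b.
Proof.
  intros Ha Hab. assert (exp a < exp b) by (apply exp_increasing; auto).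
  assert (0 < exp a) by apply exp_pos. nra.
Qed.

Lemma W_spec x : 0 < x -> 0 < LambertW x /\ LambertW x * exp (LambertW x) = x.
Proof.
  intros Hx.
  assert (Ex : exists y, -1 < y /\ y * exp y = x).
  { destruct (IVT (fun y => y * exp y - x) 0 x) as [z [Hz Ez]].
    - apply continuity_minus. apply continuity_mult. apply derivable_continuous, derivable_id.
      apply derivable_continuous, derivable_exp. apply continuity_const. intros ? ?; auto.
    - auto.
    - rewrite exp_0. lra.
    - generalize (exp_ineq1 x ltac:(lra)). nra.
    - exists z. split. lra. lra. }
  assert (S := epsilon_spec (inhabits 0) (fun y => -1 < y /\ y * exp y = x) Ex).
  unfold LambertW. destruct S as [S1 S2]. split; auto.
  assert (0 < exp (epsilon (inhabits 0) (fun y : R => -1 < y /\ y * exp y = x))) by apply exp_pos.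
  nra.
Qed.

Lemma W_pos x : 0 < x -> 0 < LambertW x.
Proof. intros; apply W_spec; auto. Qed.
Lemma W_eq x : 0 < x -> LambertW x * exp (LambertW x) = x.
Proof. intros; apply W_spec; auto. Qed.

Lemma W_le x : 0 < x -> LambertW x <= x.
Proof.
  intros Hx. destruct (W_spec x Hx) as [P E].
  generalize (exp_ineq1_le (LambertW x)). nra.
Qed.

Lemma W_unique x y : 0 < x -> 0 <= y -> y * exp y = x -> LambertW x = y.
Proof.
  intros Hx Hy E. destruct (W_spec x Hx) as [P E2].
  destruct (Rtotal_order (LambertW x) y) as [L|[L|L]]; auto.
  - generalize (fexp_incr _ _ (Rlt_le _ _ P) L). lra.
  - generalize (fexp_incr _ _ Hy L). lra.
Qed.

Definition fW (y : R) := y * exp y.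

Lemma fW_der y : derivable_pt_lim fW y ((1 + y) * exp y).
Proof. apply is_derive_Reals. unfold fW. auto_derive. auto. toR; ring. Qed.

Lemma W_deriv x : 0 < x -> derivable_pt_lim LambertW x (/ ((1 + LambertW x) * exp (LambertW x))).
Proof.
  intros Hx. set (y0 := LambertW x). destruct (W_spec x Hx) as [P E]. fold y0 in P, E.
  set (lb := y0 / 2). set (ub := y0 + 1).
  assert (Hlb : 0 < lb) by (unfold lb; lra).
  assert (lbub : lb < ub) by (unfold lb, ub; lra).
  assert (f_incr : forall a b, lb <= a -> a < b -> b <= ub -> fW a < fW b).
  { intros. unfold fW. apply fexp_incr; lra. }
  assert (flb : 0 < fW lb) by (unfold fW; generalize (exp_pos lb); nra).
  assert (Hx1 : fW lb < x < fW ub).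
  { split. rewrite <- E. apply (fexp_incr lb y0); unfold lb; lra.
    rewrite <- E. apply (fexp_incr y0 ub); unfold ub; lra. }
  assert (f_eq_g : forall z, fW lb <= z -> z <= fW ub -> comp fW LambertW z = id z).
  { intros. unfold comp, id, fW. apply W_eq. lra. }
  assert (g_wf : forall z, fW lb <= z -> z <= fW ub -> lb <= LambertW z <= ub).
  { intros z H1 H2. assert (Hz : 0 < z) by lra. destruct (W_spec z Hz) as [Pz Ez].
    split.
    - destruct (Rle_lt_dec lb (LambertW z)); auto.
      generalize (fexp_incr _ _ (Rlt_le _ _ Pz) r). fold (fW lb). lra.
    - destruct (Rle_lt_dec (LambertW z) ub); auto.
      generalize (fexp_incr ub _ ltac:(unfold ub; lra) r). fold (fW ub). lra. }
  assert (f_cont : forall a, lb <= a <= ub -> continuity_pt fW a).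
  { intros. apply derivable_continuous_pt. exists ((1 + a) * exp a). apply fW_der. }
  assert (Cg : continuity_pt LambertW x).
  { apply (continuity_pt_recip_interv fW LambertW lb ub lbub f_incr f_eq_g g_wf f_cont). exact Hx1. }
  assert (Prf : forall a, LambertW (fW lb) <= a <= LambertW (fW ub) -> derivable_pt fW a).
  { intros a _. exists ((1 + a) * exp a). apply fW_der. }
  assert (Wlb : LambertW (fW lb) = lb) by (apply W_unique; auto; lra).
  assert (Wub : LambertW (fW ub) = ub) by (apply W_unique; unfold ub; auto; unfold fW; lra || (generalize (exp_pos ub); unfold ub; nra)).
  assert (Prg_incr : LambertW (fW lb) <= LambertW x <= LambertW (fW ub)).
  { rewrite Wlb, Wub. fold y0. unfold lb, ub; lra. }
  assert (f_eq_g' : forall z, fW lb <= z <= fW ub -> comp fW LambertW z = id z).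
  { intros z [H1 H2]. apply f_eq_g; auto. }
  assert (Dv : derive_pt fW (LambertW x) (Prf (LambertW x) Prg_incr) = (1 + y0) * exp y0).
  { apply derive_pt_eq_0. apply fW_der. }
  assert (Hne : derive_pt fW (LambertW x) (Prf (LambertW x) Prg_incr) <> 0).
  { rewrite Dv. generalize (exp_pos y0). nra. }
  assert (R := derivable_pt_lim_recip_interv fW LambertW (fW lb) (fW ub) x Prf Cg
     ltac:(lra) Hx1 Prg_incr f_eq_g' Hne).
  rewrite Dv in R. unfold Rdiv in R. rewrite Rmult_1_l in R. exact R.
Qed.

Lemma loc_int (a b x : R) : a < x < b -> locally x (fun y => a < y < b).
Proof.
  intros H. assert (He : 0 < Rmin (x - a) (b - x)) by (apply Rmin_pos; lra).
  exists (mkposreal _ He). intros y Hy. apply ballR in Hy. simpl in Hy.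
  generalize (Rmin_l (x - a) (b - x)) (Rmin_r (x - a) (b - x)). intros.
  apply Rabs_lt_between in Hy. unfold minus, plus, opp in Hy; simpl in Hy. lra.
Qed.

Lemma cR_plus (f g : R -> R) x : continuous f x -> continuous g x -> continuous (fun y => f y + g y) x.
Proof. intros. apply (continuous_plus (V:=R_NormedModule) f g x); auto. Qed.
Lemma cR_mult (f g : R -> R) x : continuous f x -> continuous g x -> continuous (fun y => f y * g y) x.
Proof. intros. apply (continuous_mult (K:=R_AbsRing) f g x); auto. Qed.
Lemma cR_comp (f g : R -> R) x : continuous f x -> continuous g (f x) -> continuous (fun y => g (f y)) x.
Proof. intros. apply (continuous_comp f g x); auto. Qed.
Lemma cR_inv (f : R -> R) x : continuous f x -> f x <> 0 -> continuous (fun y => / f y) x.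
Proof. intros. apply continuous_Rinv_comp; auto. Qed.
Lemma cR_const (c : R) x : continuous (fun _ : R => c) x.
Proof. apply continuous_const. Qed.
Lemma cR_id x : continuous (fun y : R => y) x.
Proof. apply continuous_id. Qed.

Lemma C1_ext (f g : R -> R) a b : (forall x, a < x < b -> f x = g x) -> C1_on g a b -> C1_on f a b.
Proof.
  intros E H x Hx. destruct (H x Hx) as [D C].
  assert (L : locally x (fun t => g t = f t)).
  { generalize (loc_int a b x Hx). apply filter_imp. intros; symmetry; auto. }
  split.
  - apply (ex_derive_ext_loc g); auto.
  - apply (continuous_ext_loc _ (Derive g)); auto.
    generalize (loc_int a b x Hx). intros L2.
    assert (L3 : locally x (fun y => locally y (fun t => g t = f t))).
    { destruct L2 as [eps He]. exists eps. intros y Hy. generalize (loc_int a b y (He y Hy)). apply filter_imp. intros; symmetry; auto. }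
    revert L3. apply filter_imp. intros y Hy. apply Derive_ext_loc; auto.
Qed.

Lemma C1_const (c a b : R) : C1_on (fun _ => c) a b.
Proof.
  intros x Hx. split. auto_derive; auto.
  apply (continuous_ext (fun _ => 0)). intros; symmetry. apply is_derive_unique. auto_derive; auto; try (toR; ring).
  apply cR_const.
Qed.

Lemma C1_id (a b : R) : C1_on (fun y => y) a b.
Proof.
  intros x Hx. split. auto_derive; auto.
  apply (continuous_ext (fun _ => 1)). intros; symmetry. apply is_derive_unique. auto_derive; auto; try (toR; ring).
  apply cR_const.
Qed.

Lemma C1_cont (f : R -> R) a b x : C1_on f a b -> a < x < b -> continuous f x.
Proof. intros H Hx. apply cont_der. apply H; auto. Qed.

Lemma C1_plus (f g : R -> R) a b : C1_on f a b -> C1_on g a b -> C1_on (fun y => f y + g y) a b.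
Proof.
  intros Hf Hg x Hx. destruct (Hf x Hx) as [Df Cf]. destruct (Hg x Hx) as [Dg Cg]. split.
  - apply (ex_derive_plus f g); auto.
  - apply (continuous_ext_loc _ (fun y => Derive f y + Derive g y)).
    generalize (loc_int a b x Hx). apply filter_imp. intros y Hy. symmetry. apply Derive_plus; apply Hf || apply Hg; auto.
    apply cR_plus; auto.
Qed.

Lemma C1_mult (f g : R -> R) a b : C1_on f a b -> C1_on g a b -> C1_on (fun y => f y * g y) a b.
Proof.
  intros Hf Hg x Hx. destruct (Hf x Hx) as [Df Cf]. destruct (Hg x Hx) as [Dg Cg]. split.
  - apply (ex_derive_mult f g); auto.
  - apply (continuous_ext_loc _ (fun y => Derive f y * g y + f y * Derive g y)).
    generalize (loc_int a b x Hx). apply filter_imp. intros y Hy. symmetry. apply Derive_mult; apply Hf || apply Hg; auto.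
    apply cR_plus; apply cR_mult; auto; eapply C1_cont; eauto.
Qed.

Lemma C1_comp (f h h' : R -> R) a b : C1_on f a b -> (forall y, is_derive h y (h' y)) -> (forall y, continuous h' y) ->
  C1_on (fun y => h (f y)) a b.
Proof.
  intros Hf Hh Hh' x Hx. destruct (Hf x Hx) as [Df Cf]. split.
  - apply (ex_derive_comp h f). eexists; apply Hh. auto.
  - apply (continuous_ext_loc _ (fun y => Derive f y * h' (f y))).
    generalize (loc_int a b x Hx). apply filter_imp. intros y Hy. symmetry.
    rewrite Derive_comp. f_equal. apply is_derive_unique, Hh. eexists; apply Hh. apply Hf; auto.
    apply cR_mult; auto. apply cR_comp. eapply C1_cont; eauto. auto.
Qed.

Lemma W_cont y : 0 < y -> continuous LambertW y.
Proof. intros. apply cont_der. exists (/ ((1 + LambertW y) * exp (LambertW y))). apply is_derive_Reals, W_deriv; auto. Qed.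

Lemma C1_W (f : R -> R) a b : C1_on f a b -> (forall x, a < x < b -> 0 < f x) -> C1_on (fun y => LambertW (f y)) a b.
Proof.
  intros Hf Hp x Hx. destruct (Hf x Hx) as [Df Cf].
  set (W' := fun y => / ((1 + LambertW y) * exp (LambertW y))).
  assert (HW : forall y, 0 < y -> is_derive LambertW y (W' y)) by (intros; apply is_derive_Reals, W_deriv; auto).
  split.
  - apply (ex_derive_comp LambertW f). eexists; apply HW; auto. auto.
  - apply (continuous_ext_loc _ (fun y => Derive f y * W' (f y))).
    generalize (loc_int a b x Hx). apply filter_imp. intros y Hy. symmetry.
    rewrite Derive_comp. f_equal. apply is_derive_unique, HW; auto. eexists; apply HW; auto. apply Hf; auto.
    apply cR_mult; auto. unfold W'. apply cR_inv.
    + assert (Cw : continuous (fun y => LambertW (f y)) x).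
      { apply cR_comp. eapply C1_cont; eauto. apply W_cont; auto. }
      apply cR_mult. apply cR_plus. apply cR_const. auto. apply (cR_comp (fun y => LambertW (f y)) exp). auto.
      apply continuous_exp.
    + assert (0 < LambertW (f x)) by (apply W_pos; auto). generalize (exp_pos (LambertW (f x))). nra.
Qed.

Lemma C1_smooth (f f' : R -> R) a b : (forall x, is_derive f x (f' x)) -> (forall x, continuous f' x) -> C1_on f a b.
Proof.
  intros Hd Hc x Hx. split. eexists; apply Hd.
  apply (continuous_ext f'). intros; symmetry; apply is_derive_unique, Hd. auto.
Qed.

Lemma lim_left_cont (f : R -> R) x : continuous f x -> filterlim f (at_left x) (locally (f x)).
Proof.
  intros H P HP. specialize (H P HP). unfold filtermap, at_left, within in *.
  revert H. apply filter_imp. auto.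
Qed.
Lemma lim_right_cont (f : R -> R) x : continuous f x -> filterlim f (at_right x) (locally (f x)).
Proof.
  intros H P HP. specialize (H P HP). unfold filtermap, at_right, within in *.
  revert H. apply filter_imp. auto.
Qed.

Lemma lim_mult {F} {FF : Filter F} (f g : R -> R) (a b : R) :
  filterlim f F (locally a) -> filterlim g F (locally b) -> filterlim (fun x => f x * g x) F (locally (a * b)).
Proof. intros Hf Hg. apply (filterlim_comp_2 f g Rmult Hf Hg). apply (filterlim_mult (K:=R_AbsRing) a b). Qed.
Lemma lim_plus {F} {FF : Filter F} (f g : R -> R) (a b : R) :
  filterlim f F (locally a) -> filterlim g F (locally b) -> filterlim (fun x => f x + g x) F (locally (a + b)).
Proof. intros Hf Hg. apply (filterlim_comp_2 f g Rplus Hf Hg). apply (filterlim_plus (V:=R_NormedModule) a b). Qed.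
Lemma lim_compc {F} (f h : R -> R) (a : R) :
  filterlim f F (locally a) -> continuous h a -> filterlim (fun x => h (f x)) F (locally (h a)).
Proof. intros Hf Hh. apply (filterlim_comp _ _ _ f h F (locally a)); auto. Qed.
Lemma lim_const {F} {FF : Filter F} (c : R) : filterlim (fun _ : R => c) F (locally c).
Proof. apply filterlim_const. Qed.

Section Main.
Variables T r nu mu eta sigma s0 lam gam : R.
Hypotheses (hT : 0 < T) (heta : 0 < eta) (hsigma : 0 < sigma) (hs0 : 0 < s0)
  (hlam : 0 < lam) (hgam : 0 < gam).

Definition mm := (mu - r) / sigma.
Definition cc (rho : R) := s0 * eta ^ 2 * T * exp ((nu - eta * rho * ((mu - r) / sigma) - eta ^ 2 / 2) * T).
Definition ww rho := wfun T nu mu r eta sigma s0 lam gam rho.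
Definition Kd := lam * exp (- r * T) / (eta ^ 2 * T).
Definition xx rho := cc rho * theta lam gam rho.

Lemma ww_def rho : ww rho = LambertW (xx rho).
Proof. reflexivity. Qed.

Lemma theta_pos rho : -1 < rho < 1 -> 0 < theta lam gam rho.
Proof. intros. unfold theta. assert (0 < 1 - rho^2) by nra. assert (0 < lam * gam) by nra. nra. Qed.

Lemma cc_pos rho : 0 < cc rho.
Proof. unfold cc. assert (0 < eta^2) by nra. generalize (exp_pos ((nu - eta * rho * ((mu - r) / sigma) - eta ^ 2 / 2) * T)). intros.
  repeat apply Rmult_lt_0_compat; auto. nra. Qed.

Lemma xx_pos rho : -1 < rho < 1 -> 0 < xx rho.
Proof. intros. unfold xx. apply Rmult_lt_0_compat. apply cc_pos. apply theta_pos; auto. Qed.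

Lemma w_pos rho : -1 < rho < 1 -> 0 < ww rho.
Proof. intros. rewrite ww_def. apply W_pos, xx_pos; auto. Qed.
Lemma w_eq rho : -1 < rho < 1 -> ww rho * exp (ww rho) = xx rho.
Proof. intros. rewrite ww_def. apply W_eq, xx_pos; auto. Qed.
Lemma w_le rho : -1 < rho < 1 -> ww rho <= xx rho.
Proof. intros. rewrite ww_def. apply W_le, xx_pos; auto. Qed.

Lemma Kd_pos : 0 < Kd.
Proof. unfold Kd. apply Rdiv_lt_0_compat. apply Rmult_lt_0_compat; auto; apply exp_pos. apply Rmult_lt_0_compat; auto; nra. Qed.

Lemma w_over rho : -1 < rho < 1 -> ww rho = xx rho * exp (- ww rho).
Proof. intros H. rewrite <- (w_eq rho H). rewrite Rmult_assoc, <- exp_plus. replace (ww rho + - ww rho) with 0 by ring.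
  rewrite exp_0; ring. Qed.

Lemma d_form rho : -1 < rho < 1 -> dfun T nu mu r eta sigma s0 lam gam rho = Kd * cc rho * (exp (- ww rho) * (1 + ww rho / 2)).
Proof.
  intros H. unfold dfun. cbv zeta. fold (ww rho).
  assert (Ht := theta_pos rho H). assert (E := w_over rho H).
  pattern (ww rho) at 1. rewrite E. unfold xx, Kd. field. repeat split; try lra; nra.
Qed.

Lemma b_form rho : -1 < rho < 1 -> bfun T nu mu r eta sigma s0 lam gam rho = Kd * cc rho * (exp (- ww rho) * (exp (eta ^ 2 / 2 * T) - 1)).
Proof.
  intros H. unfold bfun. cbv zeta. fold (ww rho).
  assert (Ht := theta_pos rho H). assert (E := w_over rho H).
  pattern (ww rho) at 1. rewrite E. unfold xx, Kd. field. repeat split; try lra; nra.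
Qed.

Lemma g_form rho : gfun T nu mu r eta sigma s0 lam gam rho = dfun T nu mu r eta sigma s0 lam gam rho + bfun T nu mu r eta sigma s0 lam gam rho.
Proof. reflexivity. Qed.


Lemma exp_mono a b : a <= b -> exp a <= exp b.
Proof. intros H. destruct (Rle_lt_or_eq_dec a b H). left; apply exp_increasing; auto. subst; lra. Qed.

Lemma cc_C1 : C1_on cc (-1) 1.
Proof.
  apply (C1_mult (fun _ => s0 * eta ^ 2 * T) (fun rho => exp ((nu - eta * rho * ((mu - r) / sigma) - eta ^ 2 / 2) * T))).
  apply C1_const.
  apply (C1_comp (fun rho => (nu - eta * rho * ((mu - r) / sigma) - eta ^ 2 / 2) * T) exp exp).
  apply (C1_smooth _ (fun _ => - eta * ((mu - r) / sigma) * T)).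
  intros; auto_derive; auto; toR; field; lra.
  intros; apply cR_const.
  intros; auto_derive; auto; toR; ring.
  apply continuous_exp.
Qed.

Lemma theta_C1 : C1_on (theta lam gam) (-1) 1.
Proof.
  apply (C1_smooth _ (fun rho => lam * gam * (-2 * rho))).
  intros; unfold theta; auto_derive; auto; toR; ring.
  intros; apply cR_mult; [apply cR_const|apply cR_mult; [apply cR_const|apply cR_id]].
Qed.

Lemma xx_C1 : C1_on xx (-1) 1.
Proof. apply (C1_mult cc (theta lam gam)). apply cc_C1. apply theta_C1. Qed.

Lemma ww_C1 : C1_on ww (-1) 1.
Proof.
  apply (C1_ext ww (fun rho => LambertW (xx rho))). intros; apply ww_def.
  apply C1_W. apply xx_C1. apply xx_pos.
Qed.

Lemma expm_C1 : C1_on (fun rho => exp (- ww rho)) (-1) 1.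
Proof.
  apply (C1_comp ww (fun u => exp (- u)) (fun u => - exp (- u))). apply ww_C1.
  intros; auto_derive; auto; toR; ring.
  intros.
  apply cont_der. auto_derive. auto.
Qed.

Lemma d_C1 : C1_on (dfun T nu mu r eta sigma s0 lam gam) (-1) 1.
Proof.
  apply (C1_ext _ (fun rho => Kd * cc rho * (exp (- ww rho) * (1 + ww rho / 2)))). apply d_form.
  apply (C1_mult (fun rho => Kd * cc rho)). apply (C1_mult (fun _ => Kd)). apply C1_const. apply cc_C1.
  apply (C1_mult (fun rho => exp (- ww rho))). apply expm_C1.
  apply (C1_comp ww (fun u => 1 + u / 2) (fun _ => / 2)). apply ww_C1.
  intros; auto_derive; auto; toR; field.
  intros; apply cR_const.
Qed.

Lemma b_C1 : C1_on (bfun T nu mu r eta sigma s0 lam gam) (-1) 1.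
Proof.
  apply (C1_ext _ (fun rho => Kd * cc rho * (exp (- ww rho) * (exp (eta ^ 2 / 2 * T) - 1)))). apply b_form.
  apply (C1_mult (fun rho => Kd * cc rho)). apply (C1_mult (fun _ => Kd)). apply C1_const. apply cc_C1.
  apply (C1_mult (fun rho => exp (- ww rho))). apply expm_C1. apply C1_const.
Qed.

Lemma g_C1 : C1_on (gfun T nu mu r eta sigma s0 lam gam) (-1) 1.
Proof.
  apply (C1_ext _ (fun rho => dfun T nu mu r eta sigma s0 lam gam rho + bfun T nu mu r eta sigma s0 lam gam rho)).
  intros; apply g_form. apply C1_plus. apply d_C1. apply b_C1.
Qed.

Lemma Eb_pos : 0 < exp (eta ^ 2 / 2 * T) - 1.
Proof. assert (H2 : 0 < eta^2) by nra. assert (H : 0 < eta ^ 2 / 2 * T).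
  { apply Rmult_lt_0_compat; lra. }
  generalize (exp_ineq1 (eta ^ 2 / 2 * T) ltac:(lra)); lra. Qed.

Lemma d_pos rho : -1 < rho < 1 -> 0 < dfun T nu mu r eta sigma s0 lam gam rho.
Proof.
  intros H. rewrite d_form by auto. generalize Kd_pos (cc_pos rho) (exp_pos (- ww rho)) (w_pos rho H). intros.
  apply Rmult_lt_0_compat. nra. apply Rmult_lt_0_compat; lra.
Qed.
Lemma b_pos rho : -1 < rho < 1 -> 0 < bfun T nu mu r eta sigma s0 lam gam rho.
Proof.
  intros H. rewrite b_form by auto. generalize Kd_pos (cc_pos rho) (exp_pos (- ww rho)) Eb_pos. intros.
  apply Rmult_lt_0_compat. nra. apply Rmult_lt_0_compat; lra.
Qed.

Lemma xx_cont x : continuous xx x.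
Proof. apply cont_der. unfold xx, cc, theta. auto_derive. auto. Qed.
Lemma cc_cont x : continuous cc x.
Proof. apply cont_der. unfold cc. auto_derive. auto. Qed.

Lemma ball_R0 (eps : posreal) (y : R) : ball (0:R) eps y <-> Rabs y < eps.
Proof. rewrite ballR. rewrite Rminus_0_r. tauto. Qed.

Lemma w_lim_left : filterlim ww (at_left 1) (locally 0).
Proof.
  apply filterlim_locally. intros eps.
  assert (Hx := xx_cont 1).
  assert (X1 : xx 1 = 0) by (unfold xx, theta; ring).
  unfold continuous in Hx. rewrite X1 in Hx. assert (Hl := proj1 (filterlim_locally _ _) Hx eps).
  assert (L := loc_int 0 2 1 ltac:(lra)).
  unfold at_left, within. generalize (filter_and _ _ Hl L). apply filter_imp.
  intros u [H1 H2] H3. apply ball_R0.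
  assert (Hu : -1 < u < 1) by lra. generalize (w_pos u Hu) (w_le u Hu). intros.
  apply ballR in H1. apply Rabs_lt_between in H1. change (minus (xx u) 0) with (xx u - 0) in H1. rewrite Rminus_0_r in H1. rewrite Rabs_right by lra. lra.
Qed.

Lemma w_lim_right : filterlim ww (at_right (-1)) (locally 0).
Proof.
  apply filterlim_locally. intros eps.
  assert (Hx := xx_cont (-1)).
  assert (X1 : xx (-1) = 0) by (unfold xx, theta; ring).
  unfold continuous in Hx. rewrite X1 in Hx. assert (Hl := proj1 (filterlim_locally _ _) Hx eps).
  assert (L := loc_int (-2) 0 (-1) ltac:(lra)).
  unfold at_right, within. generalize (filter_and _ _ Hl L). apply filter_imp.
  intros u [H1 H2] H3. apply ball_R0.
  assert (Hu : -1 < u < 1) by lra. generalize (w_pos u Hu) (w_le u Hu). intros.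
  apply ballR in H1. apply Rabs_lt_between in H1. change (minus (xx u) 0) with (xx u - 0) in H1. rewrite Rminus_0_r in H1. rewrite Rabs_right by lra. lra.
Qed.

Lemma lim_eqv {F} (f : R -> R) (a b : R) : filterlim f F (locally a) -> a = b -> filterlim f F (locally b).
Proof. intros H ->; exact H. Qed.

Lemma ev_left : at_left 1 (fun u => -1 < u < 1).
Proof. unfold at_left, within. generalize (loc_int 0 2 1 ltac:(lra)). apply filter_imp. intros; lra. Qed.
Lemma ev_right : at_right (-1) (fun u => -1 < u < 1).
Proof. unfold at_right, within. generalize (loc_int (-2) 0 (-1) ltac:(lra)). apply filter_imp. intros; lra. Qed.

Lemma d_lim_gen {F} {FF : Filter F} x0 : F (fun u => -1 < u < 1) -> filterlim ww F (locally 0) ->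
  filterlim cc F (locally (cc x0)) ->
  filterlim (dfun T nu mu r eta sigma s0 lam gam) F (locally (Kd * cc x0)) /\
  filterlim (bfun T nu mu r eta sigma s0 lam gam) F (locally (Kd * cc x0 * (exp (eta ^ 2 / 2 * T) - 1))).
Proof.
  intros Ev Hw Hc.
  assert (He : filterlim (fun u => exp (- ww u)) F (locally 1)).
  { apply lim_eqv with (exp (- 0)). apply (lim_compc ww (fun u => exp (- u))). auto.
    apply cont_der; auto_derive; auto. rewrite Ropp_0, exp_0; auto. }
  split.
  - apply (filterlim_ext_loc (fun u => Kd * cc u * (exp (- ww u) * (1 + ww u / 2)))).
    revert Ev; apply filter_imp; intros; symmetry; apply d_form; auto.
    apply lim_eqv with (Kd * cc x0 * (1 * (1 + 0 / 2))); [|field].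
    apply lim_mult. apply lim_mult. apply lim_const. auto.
    apply lim_mult. auto. apply (lim_compc ww (fun u => 1 + u / 2)). auto.
    apply cont_der; auto_derive; auto.
  - apply (filterlim_ext_loc (fun u => Kd * cc u * (exp (- ww u) * (exp (eta ^ 2 / 2 * T) - 1)))).
    revert Ev; apply filter_imp; intros; symmetry; apply b_form; auto.
    apply lim_eqv with (Kd * cc x0 * (1 * (exp (eta ^ 2 / 2 * T) - 1))); [|ring].
    apply lim_mult. apply lim_mult. apply lim_const. auto.
    apply lim_mult. auto. apply lim_const.
Qed.

Lemma lims :
  filterlim (dfun T nu mu r eta sigma s0 lam gam) (at_left 1)
    (locally (lam * exp (- r * T) * s0
              * exp ((nu - eta * ((mu - r) / sigma) - eta ^ 2 / 2) * T))) /\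
  filterlim (dfun T nu mu r eta sigma s0 lam gam) (at_right (-1))
    (locally (lam * exp (- r * T) * s0
              * exp ((nu + eta * ((mu - r) / sigma) - eta ^ 2 / 2) * T))) /\
  filterlim (gfun T nu mu r eta sigma s0 lam gam) (at_left 1)
    (locally (lam * exp (- r * T) * s0
              * exp ((nu - eta * ((mu - r) / sigma)) * T))) /\
  filterlim (gfun T nu mu r eta sigma s0 lam gam) (at_right (-1))
    (locally (lam * exp (- r * T) * s0
              * exp ((nu + eta * ((mu - r) / sigma)) * T))).
Proof.
  assert (Hl := d_lim_gen (F := at_left 1) 1 ev_left w_lim_left (lim_left_cont cc 1 (cc_cont 1))).
  assert (Hr := d_lim_gen (F := at_right (-1)) (-1) ev_right w_lim_right (lim_right_cont cc (-1) (cc_cont (-1)))).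
  destruct Hl as [Dl Bl]. destruct Hr as [Dr Br].
  assert (Eta : 0 < eta ^ 2 * T) by (assert (0 < eta^2) by nra; nra).
  assert (E1 : Kd * cc 1 = lam * exp (- r * T) * s0 * exp ((nu - eta * ((mu - r) / sigma) - eta ^ 2 / 2) * T)).
  { unfold Kd, cc. replace (nu - eta * 1 * ((mu - r) / sigma) - eta ^ 2 / 2) with (nu - eta * ((mu - r) / sigma) - eta ^ 2 / 2) by ring.
    field. lra. }
  assert (E2 : Kd * cc (-1) = lam * exp (- r * T) * s0 * exp ((nu + eta * ((mu - r) / sigma) - eta ^ 2 / 2) * T)).
  { unfold Kd, cc. replace (nu - eta * -1 * ((mu - r) / sigma) - eta ^ 2 / 2) with (nu + eta * ((mu - r) / sigma) - eta ^ 2 / 2) by ring.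
    field. lra. }
  assert (Ex : forall z, exp ((z - eta ^ 2 / 2) * T) * exp (eta ^ 2 / 2 * T) = exp (z * T)).
  { intros. rewrite <- exp_plus. f_equal. ring. }
  repeat split.
  - apply (lim_eqv _ _ _ Dl). auto.
  - apply (lim_eqv _ _ _ Dr). auto.
  - apply (filterlim_ext _ _ (fun u => eq_sym (g_form u))).
    apply (lim_eqv _ _ _ (lim_plus _ _ _ _ Dl Bl)).
    replace (Kd * cc 1 + Kd * cc 1 * (exp (eta ^ 2 / 2 * T) - 1)) with (Kd * cc 1 * exp (eta ^ 2 / 2 * T)) by ring.
    rewrite E1. rewrite Rmult_assoc, Ex. auto.
  - apply (filterlim_ext _ _ (fun u => eq_sym (g_form u))).
    apply (lim_eqv _ _ _ (lim_plus _ _ _ _ Dr Br)).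
    replace (Kd * cc (-1) + Kd * cc (-1) * (exp (eta ^ 2 / 2 * T) - 1)) with (Kd * cc (-1) * exp (eta ^ 2 / 2 * T)) by ring.
    rewrite E2. rewrite Rmult_assoc, Ex. auto.
Qed.

Definition Cb := s0 * eta ^ 2 * T * exp ((nu + eta * Rabs ((mu - r) / sigma)) * T).

Lemma cc_bound rho : -1 < rho < 1 -> cc rho <= Cb.
Proof.
  intros H. unfold cc, Cb. assert (0 < eta^2) by nra. apply Rmult_le_compat_l.
  { apply Rlt_le. apply Rmult_lt_0_compat; [apply Rmult_lt_0_compat|]; lra || nra. }
  apply exp_mono. apply Rmult_le_compat_r. lra.
  set (m := (mu - r) / sigma).
  assert (- (rho * m) <= Rabs m) by (destruct (Rcase_abs m); [rewrite Rabs_left by auto | rewrite Rabs_right by auto]; nra).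
  assert (0 <= eta^2) by nra. nra.
Qed.

Lemma expm_le u : 0 <= u -> exp (- u) <= 1.
Proof. intros. rewrite <- exp_0. apply exp_mono. lra. Qed.

Lemma E1_le u : 0 <= u -> exp (- u) * (1 + u / 2) <= 1.
Proof.
  intros Hu. generalize (exp_ineq1_le u) (exp_pos (- u)). intros.
  replace 1 with (exp (- u) * exp u) at 2 by (rewrite <- exp_plus; replace (- u + u) with 0 by ring; apply exp_0).
  apply Rmult_le_compat_l; lra.
Qed.

Lemma Cb_pos : 0 < Cb.
Proof. unfold Cb. assert (0 < eta^2) by nra. generalize (exp_pos ((nu + eta * Rabs ((mu - r) / sigma)) * T)). intros.
  repeat apply Rmult_lt_0_compat; auto. nra. Qed.

Lemma d_bound rho : -1 < rho < 1 -> dfun T nu mu r eta sigma s0 lam gam rho <= Kd * Cb.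
Proof.
  intros H. rewrite d_form by auto. generalize Kd_pos (cc_pos rho) (cc_bound rho H) (E1_le (ww rho) (Rlt_le _ _ (w_pos rho H))).
  generalize (exp_pos (- ww rho)) (w_pos rho H). intros.
  apply Rle_trans with (Kd * cc rho * 1). apply Rmult_le_compat_l. nra. auto.
  rewrite Rmult_1_r. apply Rmult_le_compat_l; lra.
Qed.

Lemma b_bound rho : -1 < rho < 1 -> bfun T nu mu r eta sigma s0 lam gam rho <= Kd * Cb * (exp (eta ^ 2 / 2 * T) - 1).
Proof.
  intros H. rewrite b_form by auto. generalize Kd_pos (cc_pos rho) (cc_bound rho H) (expm_le (ww rho) (Rlt_le _ _ (w_pos rho H))) Eb_pos.
  generalize (exp_pos (- ww rho)). intros.
  apply Rle_trans with (Kd * cc rho * (1 * (exp (eta ^ 2 / 2 * T) - 1))). apply Rmult_le_compat_l. nra.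
  apply Rmult_le_compat_r; lra.
  rewrite Rmult_1_l. apply Rmult_le_compat_r. lra. apply Rmult_le_compat_l; lra.
Qed.

Lemma a_sec rho : -1 < rho < 1 ->
     Rmax (bfun T nu mu r eta sigma s0 lam gam rho - lam * exp (- r * T) / theta lam gam rho
                   * ((wfun T nu mu r eta sigma s0 lam gam rho) ^ 2
                      / (2 * eta ^ 4 * T ^ 2)) * e2 T eta) 0
       <= afun T nu mu r eta sigma s0 lam gam rho /\ afun T nu mu r eta sigma s0 lam gam rho <= bfun T nu mu r eta sigma s0 lam gam rho.
Proof.
  intros H. assert (Ht := theta_pos rho H). assert (Hw := w_pos rho H).
  assert (Eta : 0 < eta ^ 2 * T) by (assert (0 < eta^2) by nra; nra).
  assert (Hs : (eta * sqrt T) ^ 2 = eta ^ 2 * T) by (rewrite Rpow_mult_distr, pow2_sqrt; lra).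
  apply (a_ineq (lam * exp (- r * T) / theta lam gam rho) (ww rho / (eta ^ 2 * T)) (eta * sqrt T)).
  - apply Rdiv_lt_0_compat; auto. apply Rmult_lt_0_compat; auto; apply exp_pos.
  - apply Rlt_le, Rdiv_lt_0_compat; auto.
  - reflexivity.
  - unfold bfun. cbv zeta. fold (ww rho). rewrite Hs.
    replace (eta ^ 2 * T / 2) with (eta ^ 2 / 2 * T) by field. ring.
  - fold (ww rho). rewrite Hs. unfold e2.
    replace (2 * (eta ^ 2 * T)) with (2 * eta ^ 2 * T) by ring. field. repeat split; lra.
Qed.

Lemma main_sec :
  let d := dfun T nu mu r eta sigma s0 lam gam in
  let g := gfun T nu mu r eta sigma s0 lam gam in
  let a := afun T nu mu r eta sigma s0 lam gam in
  let b := bfun T nu mu r eta sigma s0 lam gam in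
  C1_on d (-1) 1 /\ C1_on g (-1) 1 /\
  (forall rho, -1 < rho < 1 -> 0 < d rho /\ 0 < g rho) /\
  filterlim d (at_left 1)
    (locally (lam * exp (- r * T) * s0
              * exp ((nu - eta * ((mu - r) / sigma) - eta ^ 2 / 2) * T))) /\
  filterlim d (at_right (-1))
    (locally (lam * exp (- r * T) * s0
              * exp ((nu + eta * ((mu - r) / sigma) - eta ^ 2 / 2) * T))) /\
  filterlim g (at_left 1)
    (locally (lam * exp (- r * T) * s0
              * exp ((nu - eta * ((mu - r) / sigma)) * T))) /\
  filterlim g (at_right (-1))
    (locally (lam * exp (- r * T) * s0
              * exp ((nu + eta * ((mu - r) / sigma)) * T))) /\
  (forall rho, -1 < rho < 1 ->
     Rmax (b rho - lam * exp (- r * T) / theta lam gam rho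
                   * ((wfun T nu mu r eta sigma s0 lam gam rho) ^ 2
                      / (2 * eta ^ 4 * T ^ 2)) * e2 T eta) 0
       <= a rho /\ a rho <= b rho) /\
  bounded_on a (-1) 1 /\ bounded_on b (-1) 1 /\
  bounded_on d (-1) 1 /\ bounded_on g (-1) 1.
Proof.
  intros d g a b. subst d g a b.
  destruct lims as (L1 & L2 & L3 & L4).
  assert (Eb := Eb_pos). assert (KC : 0 < Kd * Cb) by (generalize Kd_pos Cb_pos; intros; nra).
  split. apply d_C1. split. apply g_C1.
  split. { intros rho H. split. apply d_pos; auto. rewrite g_form. generalize (d_pos rho H) (b_pos rho H); lra. }
  split. auto. split. auto. split. auto. split. auto.
  split. apply a_sec.
  split. { exists (Kd * Cb * (exp (eta ^ 2 / 2 * T) - 1)). intros rho H.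
    destruct (a_sec rho H) as [A1 A2]. generalize (Rmax_r (bfun T nu mu r eta sigma s0 lam gam rho - lam * exp (- r * T) / theta lam gam rho
                   * ((wfun T nu mu r eta sigma s0 lam gam rho) ^ 2
                      / (2 * eta ^ 4 * T ^ 2)) * e2 T eta) 0). intros.
    generalize (b_bound rho H). intros. rewrite Rabs_right; lra. }
  split. { exists (Kd * Cb * (exp (eta ^ 2 / 2 * T) - 1)). intros rho H.
    generalize (b_bound rho H) (b_pos rho H). intros. rewrite Rabs_right; lra. }
  split. { exists (Kd * Cb). intros rho H.
    generalize (d_bound rho H) (d_pos rho H). intros. rewrite Rabs_right; lra. }
  { exists (Kd * Cb + Kd * Cb * (exp (eta ^ 2 / 2 * T) - 1)). intros rho H. rewrite g_form.
    generalize (d_bound rho H) (d_pos rho H) (b_bound rho H) (b_pos rho H). intros. rewrite Rabs_right; lra. }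
Qed.

End Main.




Theorem lemma2 (T r nu mu eta sigma s0 lam gam : R)
  (hT : 0 < T) (heta : 0 < eta) (hsigma : 0 < sigma) (hs0 : 0 < s0)
  (hlam : 0 < lam) (hgam : 0 < gam) :
  let d := dfun T nu mu r eta sigma s0 lam gam in
  let g := gfun T nu mu r eta sigma s0 lam gam in
  let a := afun T nu mu r eta sigma s0 lam gam in
  let b := bfun T nu mu r eta sigma s0 lam gam in
  C1_on d (-1) 1 /\ C1_on g (-1) 1 /\
  (forall rho, -1 < rho < 1 -> 0 < d rho /\ 0 < g rho) /\
  filterlim d (at_left 1)
    (locally (lam * exp (- r * T) * s0
              * exp ((nu - eta * ((mu - r) / sigma) - eta ^ 2 / 2) * T))) /\
  filterlim d (at_right (-1))
    (locally (lam * exp (- r * T) * s0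
              * exp ((nu + eta * ((mu - r) / sigma) - eta ^ 2 / 2) * T))) /\
  filterlim g (at_left 1)
    (locally (lam * exp (- r * T) * s0
              * exp ((nu - eta * ((mu - r) / sigma)) * T))) /\
  filterlim g (at_right (-1))
    (locally (lam * exp (- r * T) * s0
              * exp ((nu + eta * ((mu - r) / sigma)) * T))) /\
  (forall rho, -1 < rho < 1 ->
     Rmax (b rho - lam * exp (- r * T) / theta lam gam rho
                   * ((wfun T nu mu r eta sigma s0 lam gam rho) ^ 2
                      / (2 * eta ^ 4 * T ^ 2)) * e2 T eta) 0
       <= a rho /\ a rho <= b rho) /\
  bounded_on a (-1) 1 /\ bounded_on b (-1) 1 /\
  bounded_on d (-1) 1 /\ bounded_on g (-1) 1.
Proof.
  exact (main_sec T r nu mu eta sigma s0 lam gam hT heta hsigma hs0 hlam hgam).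
Qed.
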